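(* Let $N\in\mathbb{N}$ and $|\mu\rangle\in(\mathbb{R}^4)^{\otimes N}$ with $\mu_{1\cdots1}=1$ (equivalently, $\Pi^{(N)}_\mu$ is unital and trace-preserving). If $\Pi^{(N)}_\mu$ is entanglement breaking, then $\sum_{i_1,\dots,i_N}|\mu_{i_1\cdots i_N}|\le 2^N$.
   Context: Pauli matrices $\sigma_1=I_2$, $\sigma_2=\begin{pmatrix}0&1\\1&0\end{pmatrix}$, $\sigma_3=\begin{pmatrix}1&0\\0&-1\end{pmatrix}$, $\sigma_4=\begin{pmatrix}0&-i\\i&0\end{pmatrix}$; $\Pi^{(N)}_\mu(X)=\sum_{i_1,\dots,i_N}\frac{\mu_{i_1\cdots i_N}}{2^N}\mathrm{Tr}[(\sigma_{i_1}\otimes\cdots\otimes\sigma_{i_N})X]\sigma_{i_1}\otimes\cdots\otimes\sigma_{i_N}$ on $\mathcal{M}_2^{\otimes N}$. A linear map $L:\mathcal{M}_{d_1}\to\mathcal{M}_{d_2}$ is entanglement breaking if its Choi matrix $C_L=(\mathrm{id}_{d_1}\otimes L)(|\Omega\rangle\langle\Omega|)$, $|\Omega\rangle=\sum_{i=1}^{d_1}|i\rangle\otimes|i\rangle$, is separable, i.e. a finite sum $\sum_k A_k\otimes B_k$ with $A_k,B_k$ positive semidefinite. *)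

(* Defs.v *)
From HB Require Import structures.
From mathcomp Require Import all_boot all_order all_algebra.
From mathcomp Require Import complex mxtens.
Set Implicit Arguments. Unset Strict Implicit. Unset Printing Implicit Defensive.
Import Order.TTheory GRing.Theory Num.Theory.
Local Open Scope ring_scope.

Section Pauli.
Variable R : rcfType.
Local Notation C := (R[i]).

(* Pauli matrices sigma_1..sigma_4, indexed by 'I_4 = {0,1,2,3}
   (index a corresponds to sigma_{a+1}). *)
Definition pauli (a : 'I_4) : 'M[C]_2 :=
  \matrix_(r < 2, c < 2)
    match nat_of_ord a, nat_of_ord r, nat_of_ord c with
    | 0, r, c => if r == c then 1 else 0
    | 1, r, c => if r == c then 0 else 1
    | 2, 0, 0 => 1 | 2, 1, 1 => -1 | 2, _, _ => 0
    | _, 0, 1 => - 'i | _, 1, 0 => 'i | _, _, _ => 0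
    end.

(* M_2^{(x)N} is identified with 'M_(2^N) via the Kronecker convention:
   the k-th tensor factor (k = 0 first) corresponds to the binary digit of
   weight 2^(N-1-k) of the row/column index. *)
Definition qbit (N : nat) (r : 'I_(2 ^ N)) (k : 'I_N) : 'I_2 :=
  inord ((r %/ 2 ^ (N - k.+1)) %% 2).

Definition pauliN (N : nat) (f : {ffun 'I_N -> 'I_4}) : 'M[C]_(2 ^ N) :=
  \matrix_(r, c) \prod_(k < N) pauli (f k) (qbit r k) (qbit c k).

Definition PiMap (N : nat) (mu : {ffun 'I_N -> 'I_4} -> R)
    (X : 'M[C]_(2 ^ N)) : 'M[C]_(2 ^ N) :=
  \sum_(f : {ffun 'I_N -> 'I_4})
     (real_complex R (mu f) / (2 ^ N)%:R * \tr (pauliN f *m X)) *: pauliN f.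

Definition adjmx m n (A : 'M[C]_(m, n)) : 'M[C]_(n, m) := (map_mx Num.conj A)^T.

Definition psd n (A : 'M[C]_n) : Prop :=
  adjmx A = A /\ forall v : 'cV[C]_n, 0 <= (adjmx v *m A *m v) 0 0.

(* Choi matrix (id (x) L)(|Omega><Omega|) = sum_{i,j} |i><j| (x) L(|i><j|) *)
Definition choi d1 d2 (L : 'M[C]_d1 -> 'M[C]_d2) : 'M[C]_(d1 * d2) :=
  \sum_(i < d1) \sum_(j < d1) (delta_mx i j *t L (delta_mx i j)).

Definition separable d1 d2 (M : 'M[C]_(d1 * d2)) : Prop :=
  exists s : seq ('M[C]_d1 * 'M[C]_d2),
    (forall p, p \in s -> psd p.1 /\ psd p.2) /\
    M = \sum_(p <- s) (p.1 *t p.2).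

Definition entanglement_breaking d1 d2 (L : 'M[C]_d1 -> 'M[C]_d2) : Prop :=
  separable (choi L).

End Pauli.

(* Main.v *)
Require Import Defs.
From HB Require Import structures.
From mathcomp Require Import all_boot all_order all_algebra.
From mathcomp Require Import complex mxtens.
From mathcomp Require Import ring.
Import Order.TTheory GRing.Theory Num.Theory.
Local Open Scope ring_scope.

Lemma digits_inj (m : nat) : forall r c : nat, (r < 2 ^ m)%N -> (c < 2 ^ m)%N ->
  (forall j, (j < m)%N -> ((r %/ 2 ^ j) %% 2 = (c %/ 2 ^ j) %% 2)%N) -> r = c.
Proof.
elim: m => [|m IH] r c.
  by rewrite expn0 !ltnS !leqn0 => /eqP-> /eqP->.
move=> hr hc h.
rewrite (divn_eq r 2) (divn_eq c 2).
have h0 := h 0%N isT; rewrite !expn0 !divn1 in h0.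
rewrite h0; congr (_ * _ + _)%N.
apply: IH.
- by rewrite ltn_divLR // -expnSr.
- by rewrite ltn_divLR // -expnSr.
move=> j hj; have := h j.+1 hj.
by rewrite !expnS !divnMA.
Qed.

Section Q.
Variable N : nat.
Definition qv (r : 'I_(2 ^ N)) : {ffun 'I_N -> 'I_2} := [ffun k => qbit r k].

Lemma qv_inj : injective qv.
Proof.
move=> r c /ffunP h; apply: val_inj.
apply: (@digits_inj N); rewrite ?ltn_ord // => j hj.
have hk : (N - j.+1 < N)%N by rewrite ltn_subLR // addSn ltnS leq_addl.
have := h (Ordinal hk); rewrite !ffunE /qbit => /(congr1 val) /=.
rewrite !inordK ?ltn_mod //= subnSK // subKn //; exact: ltnW.
Qed.

Lemma qv_bij : bijective qv.
Proof.
apply: inj_card_bij; first exact: qv_inj.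
by rewrite card_ffun !card_ord.
Qed.

Lemma sum_qv (V : nmodType) (F : {ffun 'I_N -> 'I_2} -> V) :
  \sum_(b : {ffun 'I_N -> 'I_2}) F b = \sum_(r < 2 ^ N) F (qv r).
Proof. by rewrite (reindex qv) //; apply: onW_bij; exact: qv_bij. Qed.
End Q.

Section P.
Variable R : rcfType.
Local Notation C := (R[i]).

Lemma iiC : 'i * ('i : C)^* = 1.
Proof. by rewrite conjCi mulrN -expr2 sqrCi opprK. Qed.

Lemma conjNi : (- 'i : C)^* = 'i.
Proof. by rewrite -{2}(conjCK ('i : C)) conjCi. Qed.

Lemma pauli_orth1 (a b : 'I_4) :
  \sum_(x < 2) \sum_(y < 2) pauli R a x y * (pauli R b x y)^* =
  (if a == b then 2 else 0).
Proof.
case: a => [[|[|[|[|a]]]] ha] //; case: b => [[|[|[|[|b]]]] hb] //;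
rewrite !big_ord_recr !big_ord0 /= !mxE /=;
rewrite ?mulr0 ?mul0r ?mulr1 ?mul1r ?add0r ?addr0 ?mulrN ?mulNr ?opprK; try done.
all: rewrite ?conjNi ?conjCi ?rmorph0 ?rmorph1 ?rmorphN ?conjCi ?rmorph0 ?rmorph1 ?opprK ?mulr1 ?mul1r ?mulr0 ?mul0r ?addr0 ?add0r ?subrr ?iiC ?mulrN ?mulNr.
all: rewrite ?conjCi -?expr2 ?sqrCi ?opprK ?subrr ?addNr ?oppr0 //.
Qed.
Lemma pauli_compl1 (x y x' y' : 'I_2) :
  \sum_(a < 4) pauli R a x y * (pauli R a x' y')^* =
  (if (x == x') && (y == y') then 2 else 0).
Proof.
case: x => [[|[|x]] hx] //; case: y => [[|[|y]] hy] //;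
case: x' => [[|[|x']] hx'] //; case: y' => [[|[|y']] hy'] //;
rewrite !big_ord_recr !big_ord0 /= !mxE /=;
rewrite ?mulr0 ?mul0r ?mulr1 ?mul1r ?add0r ?addr0 ?mulrN ?mulNr ?opprK; try done.
all: rewrite ?conjNi ?conjCi ?rmorph0 ?rmorph1 ?rmorphN ?conjCi ?rmorph0 ?rmorph1 ?opprK ?mulr1 ?mul1r ?mulr0 ?mul0r ?addr0 ?add0r ?subrr ?iiC ?mulrN ?mulNr.
all: rewrite ?conjCi -?expr2 ?sqrCi ?opprK ?subrr ?addNr ?oppr0 //.
Qed.

Lemma sum_prod2 (I J : finType) (h : I -> J -> J -> C) :
  \sum_(b : {ffun I -> J}) \sum_(b' : {ffun I -> J}) \prod_k h k (b k) (b' k) =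
  \prod_k \sum_x \sum_y h k x y.
Proof.
rewrite bigA_distr_bigA; apply: eq_bigr => b _; by rewrite bigA_distr_bigA.
Qed.

Lemma prod2 N : \prod_(k < N) (2 : C) = (2 ^ N)%:R.
Proof. by rewrite prodr_const card_ord natrX. Qed.

Lemma pauliN_orth N (f g : {ffun 'I_N -> 'I_4}) :
  \sum_(r < 2 ^ N) \sum_(c < 2 ^ N) pauliN R f r c * (pauliN R g r c)^* =
  (if f == g then (2 ^ N)%:R else 0).
Proof.
transitivity (\sum_(b : {ffun 'I_N -> 'I_2}) \sum_(b' : {ffun 'I_N -> 'I_2})
   \prod_k (pauli R (f k) (b k) (b' k) * (pauli R (g k) (b k) (b' k))^* )).
  rewrite sum_qv; apply: eq_bigr => r _; rewrite sum_qv; apply: eq_bigr => c _.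
  by rewrite !mxE rmorph_prod -big_split; apply: eq_bigr => k _; rewrite !ffunE.
rewrite (@sum_prod2 _ _ (fun k x y => pauli R (f k) x y * (pauli R (g k) x y)^*)).
under eq_bigr do rewrite pauli_orth1.
case: eqP => [->|/eqP hfg].
  by under eq_bigr do rewrite eqxx; rewrite prod2.
have [k hk] : exists k, f k != g k.
  apply/existsP; apply: contraR hfg; rewrite negb_exists => /forallP h.
  by apply/eqP/ffunP => k; apply/eqP; move: (h k); rewrite negbK.
by rewrite (bigD1 k) //= (negPf hk) mul0r.
Qed.

Lemma pauliN_compl N (r c r' c' : 'I_(2 ^ N)) :
  \sum_(g : {ffun 'I_N -> 'I_4}) pauliN R g r c * (pauliN R g r' c')^* =
  (if (r == r') && (c == c') then (2 ^ N)%:R else 0).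
Proof.
transitivity (\prod_(k < N) \sum_(a < 4)
   (pauli R a (qbit r k) (qbit c k) * (pauli R a (qbit r' k) (qbit c' k))^* )).
  rewrite bigA_distr_bigA; apply: eq_bigr => g _.
  by rewrite !mxE rmorph_prod -big_split.
under eq_bigr do rewrite pauli_compl1.
case: (boolP [forall k, (qbit r k == qbit r' k) && (qbit c k == qbit c' k)]).
  move/forallP => h.
  have -> : r = r'.
    by apply: qv_inj; apply/ffunP => k; rewrite !ffunE; case/andP: (h k) => /eqP.
  have -> : c = c'.
    by apply: qv_inj; apply/ffunP => k; rewrite !ffunE; case/andP: (h k) => _ /eqP.
  by rewrite !eqxx; under eq_bigr do rewrite !eqxx; rewrite prod2.
rewrite negb_forall => /existsP [k hk].
rewrite (bigD1 k) //= (negPf hk) mul0r.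
case: eqP => // er; case: eqP => // ec; subst.
by rewrite !eqxx in hk.
Qed.
End P.

Section CS.
Variable F : numDomainType.
Lemma CS (I : finType) (x y : I -> F) :
  (forall g, 0 <= x g) -> (forall g, 0 <= y g) ->
  (\sum_g x g * y g) ^+ 2 <= (\sum_g x g ^+ 2) * (\sum_g y g ^+ 2).
Proof.
move=> hx hy.
have rx g : x g \is Num.real by exact: ger0_real.
have ry g : y g \is Num.real by exact: ger0_real.
set L := (\sum_g x g * y g) ^+ 2; set Rr := _ * _.
suff H : L *+ 2 <= Rr *+ 2 by move: H; rewrite lerMn2r.
rewrite /L /Rr.
rewrite expr2 !big_distrlr /= -!sumrMnl.
apply: le_trans (_ : \sum_g \sum_h ((x g * y h) ^+ 2 + (x h * y g) ^+ 2) <= _).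
  apply: ler_sum => g _; rewrite -sumrMnl; apply: ler_sum => h _.
  have -> : x g * y g * (x h * y h) = (x g * y h) * (x h * y g) by ring.
  apply: (real_leif_mean_square_scaled _ _).1; apply: rpredM => //.
rewrite le_eqVlt; apply/orP; left; apply/eqP.
under [in RHS]eq_bigr do rewrite mulr2n.
rewrite (eq_bigr (fun g => \sum_h (x g * y h) ^+ 2 + \sum_h (x h * y g) ^+ 2)); last by move=> g _; rewrite big_split.
rewrite !big_split /=; congr (_ + _).
  by apply: eq_bigr => g _; apply: eq_bigr => h _; rewrite exprMn.
rewrite exchange_big /=; apply: eq_bigr => g _; apply: eq_bigr => h _.
by rewrite exprMn mulrC.
Qed.
End CS.

Section Main.
Variable R : rcfType.
Variable N : nat.
Local Notation C := (R[i]).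
Local Notation I := ('I_(2 ^ N)).

Lemma conjN' (x : C) : (- x)^* = - x^*.
Proof. exact: rmorphN. Qed.

Lemma qform (A : 'M[C]_(2 ^ N)) (v : 'cV[C]_(2 ^ N)) :
  (adjmx v *m A *m v) 0 0 = \sum_y (\sum_x (v x 0)^* * A x y) * v y 0.
Proof. by rewrite !mxE; apply: eq_bigr => y _; rewrite !mxE; congr (_ * _); apply: eq_bigr => x _; rewrite !mxE. Qed.

Lemma sum1pt (F : I -> C) i : (forall y, y != i -> F y = 0) -> \sum_y F y = F i.
Proof. by move=> h; rewrite (bigD1 i) //= big1 ?addr0 // => y /h. Qed.

Lemma sum2pt (F : I -> C) i j : i != j -> (forall y, y != i -> y != j -> F y = 0) ->
  \sum_y F y = F i + F j.
Proof.
move=> hij h; rewrite (bigD1 i) //= (bigD1 j) 1?eq_sym //= big1 ?addr0 // => y /andP[hyi hyj].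
exact: h.
Qed.

Lemma psd_herm (A : 'M[C]_(2 ^ N)) : psd A -> forall i j, A j i = (A i j)^*.
Proof. by case=> h _ i j; rewrite -{1}h !mxE. Qed.

Lemma psd_diag (A : 'M[C]_(2 ^ N)) : psd A -> forall i, 0 <= A i i.
Proof.
case=> _ h i; have := h (\col_x ((x == i)%:R)); rewrite qform.
rewrite (@sum1pt _ i) => [|y hy]; last by rewrite mxE (negPf hy) mulr0.
rewrite (@sum1pt _ i) => [|y hy]; last by rewrite mxE (negPf hy) rmorph0 mul0r.
by rewrite !mxE eqxx rmorph1 mul1r mulr1.
Qed.

Lemma psd_entry (A : 'M[C]_(2 ^ N)) : psd A -> forall i j, `|A i j| ^+ 2 <= A i i * A j j.
Proof.
move=> hA i j.
have hd := @psd_diag A hA; have hh := @psd_herm A hA.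
case: (eqVneq i j) => [<-|hij].
  by rewrite ger0_norm ?hd // expr2.
have hji : j != i by rewrite eq_sym.
set a := A i j.
have hQ : forall t, 0 <= t -> 0 <= t ^+ 2 * A i i - 2 * t * (a * a^*) + (a * a^*) * A j j.
  move=> t ht.
  case: hA => _ hv; have := hv (\col_x (if x == i then t else if x == j then - A j i else 0)).
  rewrite qform.
  rewrite (@sum2pt _ i j hij) => [|y hyi hyj]; last by rewrite mxE (negPf hyi) (negPf hyj) mulr0.
  rewrite (@sum2pt _ i j hij) => [|y hyi hyj]; last by rewrite mxE (negPf hyi) (negPf hyj) rmorph0 mul0r.
  rewrite (@sum2pt _ i j hij) => [|y hyi hyj]; last by rewrite mxE (negPf hyi) (negPf hyj) rmorph0 mul0r.
  rewrite !mxE eqxx (negPf hji) eqxx.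
  rewrite (hh i j) -/a conjN' conjCK (geC0_conj ht).
  by congr (0 <= _); ring.
have p0 : 0 <= a * a^* by rewrite -normCK exprn_ge0.
rewrite normCK.
case: (eqVneq (a * a^*) 0) => [->|pn0]; first by rewrite mulr_ge0.
have pp : 0 < a * a^* by rewrite lt_def pn0 p0.
have hii := hd i; have hjj := hd j.
case: (eqVneq (A i i) 0) => [h0|hn0].
  have := hQ (A j j + 1) (addr_ge0 hjj ler01).
  have -> : (A j j + 1) ^+ 2 * A i i - 2 * (A j j + 1) * (a * a^*) + a * a^* * A j j
      = - ((a * a^*) * (A j j + 2)) by rewrite h0; ring.
  rewrite oppr_ge0 => hle.
  have : 0 < a * a^* * (A j j + 2) by rewrite mulr_gt0 // ltr_wpDl.
  by move=> hgt; have := lt_le_trans hgt hle; rewrite ltxx.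
have pii : 0 < A i i by rewrite lt_def hn0 hii.
have := hQ (a * a^* / A i i) (divr_ge0 p0 hii).
have -> : (a * a^* / A i i) ^+ 2 * A i i - 2 * (a * a^* / A i i) * (a * a^*) + a * a^* * A j j
   = (a * a^*) * (A j j - a * a^* / A i i) by field.
rewrite pmulr_rge0 // subr_ge0 ler_pdivrMr // => h.
by rewrite [A i i * _]mulrC.
Qed.

Lemma psd_frob (A : 'M[C]_(2 ^ N)) : psd A ->
  \sum_(p : I * I) `|A p.1 p.2| ^+ 2 <= (\tr A) ^+ 2.
Proof.
move=> hA; rewrite /mxtrace expr2 big_distrlr /= pair_bigA /=.
apply: ler_sum => p _; exact: psd_entry.
Qed.

Lemma psd_tr_ge0 (A : 'M[C]_(2 ^ N)) : psd A -> 0 <= \tr A.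
Proof. by move=> hA; apply: sumr_ge0 => i _; exact: psd_diag. Qed.

Definition coef (e : I * I -> I * I) (A : I * I -> C) (g : {ffun 'I_N -> 'I_4}) :=
  \sum_p A p * (pauliN R g (e p).1 (e p).2)^*.

Lemma coef_term e (einj : injective e) (A : I * I -> C) p q :
  \sum_(g : {ffun 'I_N -> 'I_4}) (A p * (pauliN R g (e p).1 (e p).2)^* ) * (A q * (pauliN R g (e q).1 (e q).2)^* )^*
  = if q == p then (2 ^ N)%:R * (A p * (A q)^* ) else 0.
Proof.
transitivity (A p * (A q)^* * \sum_(g : {ffun 'I_N -> 'I_4}) pauliN R g (e q).1 (e q).2 * (pauliN R g (e p).1 (e p).2)^* ).
  rewrite big_distrr /=; apply: eq_bigr => g _.
  rewrite rmorphM /= conjCK; ring.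
rewrite pauliN_compl.
have -> : ((e q).1 == (e p).1) && ((e q).2 == (e p).2) = (e q == e p) by [].
rewrite (inj_eq einj).
by case: eqP => _; rewrite ?mulr0 // mulrC.
Qed.

Lemma coef_sq e (einj : injective e) (A : I * I -> C) :
  \sum_g `|coef e A g| ^+ 2 = (2 ^ N)%:R * \sum_p `|A p| ^+ 2.
Proof.
transitivity (\sum_(g : {ffun 'I_N -> 'I_4}) \sum_p \sum_q (A p * (pauliN R g (e p).1 (e p).2)^* ) * (A q * (pauliN R g (e q).1 (e q).2)^* )^*).
  apply: eq_bigr => g _; rewrite normCK /coef rmorph_sum big_distrlr /=.
  by [].
rewrite exchange_big /=; rewrite big_distrr /=; apply: eq_bigr => p _.
rewrite exchange_big /=.
under eq_bigr do rewrite coef_term //.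
rewrite -big_mkcond big_pred1_eq normCK //.
Qed.

Lemma pauli0 (x y : 'I_2) : pauli R ord0 x y = (x == y)%:R.
Proof. by rewrite mxE /=; case: ifP => h; rewrite -val_eqE /= h. Qed.

Lemma pauliN0 (r c : I) : pauliN R [ffun => ord0] r c = (r == c)%:R.
Proof.
rewrite mxE; under eq_bigr do rewrite ffunE pauli0.
case: (eqVneq r c) => [<-|hrc]; first by rewrite big1 // => k _; rewrite eqxx.
have [k hk] : exists k, qbit r k != qbit c k.
  apply/existsP; apply: contraR hrc; rewrite negb_exists => /forallP h.
  apply/eqP/qv_inj/ffunP => k; rewrite !ffunE; apply/eqP; move: (h k); rewrite negbK.
  done.
by rewrite (bigD1 k) //= (negPf hk) mul0r.
Qed.

Definition sw (p : I * I) := (p.2, p.1).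
Lemma sw_inj : injective sw.
Proof. by move=> [? ?] [? ?] [-> ->]. Qed.

Lemma coef0 (e : I * I -> I * I) (A : 'M[C]_(2 ^ N)) :
  (forall p, ((e p).1 == (e p).2) = (p.1 == p.2)) ->
  coef e (fun p => A p.1 p.2) [ffun => ord0] = \tr A.
Proof.
move=> he; rewrite /coef /mxtrace.
under eq_bigr do rewrite pauliN0 he rmorph_nat.
rewrite -(pair_bigA _ (fun i j => A i j * (i == j)%:R)) /=.
apply: eq_bigr => i _; rewrite (@sum1pt _ i) ?eqxx ?mulr1 // => j hj.
by rewrite eq_sym (negPf hj) mulr0.
Qed.

Definition Phi (g : {ffun 'I_N -> 'I_4}) (M : 'M[C]_(2 ^ N * 2 ^ N)) :=
  \sum_(p : I * I) \sum_(q : I * I) M (mxtens_index (p.1, q.1)) (mxtens_index (p.2, q.2))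
     * ((pauliN R g p.2 p.1)^* * (pauliN R g q.1 q.2)^* ).

Lemma Phi_tens g (A B : 'M[C]_(2 ^ N)) :
  Phi g (A *t B) = coef sw (fun p => A p.1 p.2) g * coef (fun p => p) (fun p => B p.1 p.2) g.
Proof.
rewrite /Phi /coef big_distrlr /=; apply: eq_bigr => p _; apply: eq_bigr => q _.
by rewrite tensmxE; ring.
Qed.

Lemma Phi_add g (M1 M2 : 'M[C]_(2 ^ N * 2 ^ N)) : Phi g (M1 + M2) = Phi g M1 + Phi g M2.
Proof.
rewrite /Phi -big_split; apply: eq_bigr => p _; rewrite -big_split; apply: eq_bigr => q _.
by rewrite mxE mulrDl.
Qed.

Lemma Phi0 g : Phi g 0 = 0.
Proof. by rewrite /Phi big1 // => p _; rewrite big1 // => q _; rewrite mxE mul0r. Qed.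

Lemma Phi_sum g (T : Type) (s : seq T) (F : T -> 'M[C]_(2 ^ N * 2 ^ N)) :
  Phi g (\sum_(x <- s) F x) = \sum_(x <- s) Phi g (F x).
Proof. exact: (big_morph (Phi g) (Phi_add g) (Phi0 g)). Qed.

Lemma choiE (L : 'M[C]_(2 ^ N) -> 'M[C]_(2 ^ N)) (i j k l : I) :
  choi L (mxtens_index (i, k)) (mxtens_index (j, l)) = L (delta_mx i j) k l.
Proof.
rewrite /choi summxE (@sum1pt _ i) => [|i' hi'].
  rewrite summxE (@sum1pt _ j) => [|j' hj'].
    by rewrite tensmxE mxE !eqxx mul1r.
  by rewrite tensmxE mxE eqxx eq_sym (negPf hj') mul0r.
rewrite summxE big1 // => j' _.
by rewrite tensmxE mxE eq_sym (negPf hi') mul0r.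
Qed.

Lemma tr_delta (A : 'M[C]_(2 ^ N)) (i j : I) : \tr (A *m delta_mx i j) = A j i.
Proof.
rewrite /mxtrace (@sum1pt _ j) => [|x hx].
  rewrite mxE (@sum1pt _ i) => [|y hy]; first by rewrite mxE !eqxx mulr1.
  by rewrite mxE (negPf hy) mulr0.
by rewrite mxE big1 // => y _; rewrite mxE (negPf hx) andbF mulr0.
Qed.

Lemma PiMapE (mu : {ffun 'I_N -> 'I_4} -> R) (i j k l : I) :
  PiMap mu (delta_mx i j) k l =
  \sum_f real_complex R (mu f) / (2 ^ N)%:R * pauliN R f j i * pauliN R f k l.
Proof.
rewrite /PiMap summxE; apply: eq_bigr => f _.
by rewrite mxE tr_delta.
Qed.

Lemma Phi_choi (mu : {ffun 'I_N -> 'I_4} -> R) g :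
  Phi g (choi (PiMap mu)) = (2 ^ N)%:R * real_complex R (mu g).
Proof.
rewrite /Phi.
under eq_bigr do under eq_bigr do rewrite choiE PiMapE big_distrl /=.
under eq_bigr do rewrite exchange_big /=.
rewrite exchange_big /=.
have key f : \sum_(p : I * I) \sum_(q : I * I)
   (real_complex R (mu f) / (2 ^ N)%:R * pauliN R f p.2 p.1 * pauliN R f q.1 q.2)
     * ((pauliN R g p.2 p.1)^* * (pauliN R g q.1 q.2)^* ) =
   real_complex R (mu f) / (2 ^ N)%:R
   * (\sum_(p : I * I) pauliN R f p.2 p.1 * (pauliN R g p.2 p.1)^* )
   * (\sum_(q : I * I) pauliN R f q.1 q.2 * (pauliN R g q.1 q.2)^* ).
  rewrite -mulrA big_distrlr big_distrr /=; apply: eq_bigr => p _.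
  by rewrite big_distrr /=; apply: eq_bigr => q _; ring.
have Op f : \sum_(p : I * I) pauliN R f p.2 p.1 * (pauliN R g p.2 p.1)^* =
   if f == g then (2 ^ N)%:R else 0.
  by rewrite -(pair_bigA _ (fun i j => pauliN R f j i * (pauliN R g j i)^* )) exchange_big /= pauliN_orth.
have Oq f : \sum_(q : I * I) pauliN R f q.1 q.2 * (pauliN R g q.1 q.2)^* =
   if f == g then (2 ^ N)%:R else 0.
  by rewrite -(pair_bigA _ (fun i j => pauliN R f i j * (pauliN R g i j)^* )) pauliN_orth.
under eq_bigr do rewrite key Op Oq.
rewrite (bigD1 g) //= big1 ?addr0 => [|f hf]; last by rewrite (negPf hf) !mulr0.
have n0 : (2 ^ N)%:R != 0 :> C by rewrite pnatr_eq0 expn_eq0.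
by rewrite eqxx; field.
Qed.

Lemma id_inj : injective (fun p : I * I => p).
Proof. by []. Qed.

Lemma bound (A B : 'M[C]_(2 ^ N)) : psd A -> psd B ->
  \sum_g `|coef sw (fun p => A p.1 p.2) g| * `|coef (fun p => p) (fun p => B p.1 p.2) g|
  <= (2 ^ N)%:R * (\tr A * \tr B).
Proof.
move=> hA hB.
have tA := @psd_tr_ge0 A hA; have tB := @psd_tr_ge0 B hB.
have n0 : 0 <= (2 ^ N)%:R :> C by [].
rewrite -(ler_pXn2r (_ : (0 < 2)%N)) ?nnegrE //; last first.
- by rewrite mulr_ge0 // mulr_ge0.
- by apply: sumr_ge0 => g _; rewrite mulr_ge0.
have hcs := (@CS _ _ (fun g => `|coef sw (fun p => A p.1 p.2) g|)
  (fun g => `|coef (fun p => p) (fun p => B p.1 p.2) g|) (fun g => normr_ge0 _) (fun g => normr_ge0 _)).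
apply: le_trans hcs _.
rewrite (@coef_sq sw sw_inj) (@coef_sq _ id_inj) /=.
have -> : ((2 ^ N)%:R * (\tr A * \tr B)) ^+ 2 =
   ((2 ^ N)%:R * \tr A ^+ 2) * ((2 ^ N)%:R * \tr B ^+ 2) :> C by ring.
apply: ler_pM.
- by rewrite mulr_ge0 // sumr_ge0 // => p _; rewrite exprn_ge0.
- by rewrite mulr_ge0 // sumr_ge0 // => p _; rewrite exprn_ge0.
- by rewrite ler_wpM2l // (@psd_frob A hA).
- by rewrite ler_wpM2l // (@psd_frob B hB).
Qed.
End Main.

Lemma normc_real (R : rcfType) (x : R) : `|real_complex R x| = real_complex R `|x|.
Proof.
case: (lerP 0 x) => hx.
  by rewrite !ger0_norm // ler0c.
rewrite !ltr0_norm // ?rmorphN //.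
by rewrite -(rmorph0 (real_complex R)) ltcR.
Qed.

Theorem mainTheorem4 (R : rcfType) (N : nat) (mu : {ffun 'I_N -> 'I_4} -> R) :
  mu [ffun => ord0] = 1 ->
  entanglement_breaking (PiMap mu) ->
  \sum_(f : {ffun 'I_N -> 'I_4}) `|mu f| <= (2 ^ N)%:R.
Proof.
move=> h0 [s [hs hC]].
rewrite -lecR.
have -> : real_complex R (\sum_f `|mu f|) = \sum_f `|real_complex R (mu f)|.
  by rewrite rmorph_sum; apply: eq_bigr => f _; rewrite normc_real.
have -> : real_complex R (2 ^ N)%:R = (2 ^ N)%:R by rewrite rmorph_nat.
have npos : 0 < (2 ^ N)%:R :> R[i] by rewrite ltr0n expn_gt0.
rewrite -(ler_pM2l npos) big_distrr /=.
have E f : (2 ^ N)%:R * `|real_complex R (mu f)| = `|Phi R N f (choi (PiMap mu))|.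
  by rewrite Phi_choi normrM normr_nat.
under eq_bigr do rewrite E.
rewrite hC.
under eq_bigr do rewrite Phi_sum.
have H1 : \sum_f `|\sum_(x <- s) Phi R N f (x.1 *t x.2)| <= \sum_f \sum_(p <- s)
   `|coef R N (sw N) (fun q => p.1 q.1 q.2) f| * `|coef R N (fun q => q) (fun q => p.2 q.1 q.2) f|.
  apply: ler_sum => f _; apply: le_trans (ler_norm_sum _ _ _) _.
  by apply: ler_sum => p _; rewrite Phi_tens normrM.
apply: le_trans H1 _.
rewrite exchange_big /=.
apply: (@le_trans _ _ (\sum_(p <- s) (2 ^ N)%:R * (\tr p.1 * \tr p.2))).
  rewrite !big_seq; apply: ler_sum => p hp; case: (hs p hp) => h1 h2; exact: bound.
rewrite -big_distrr /= ler_pM2l //.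
have -> : \sum_(p <- s) \tr p.1 * \tr p.2 = Phi R N [ffun => ord0] (choi (PiMap mu)).
  rewrite hC Phi_sum; apply: eq_bigr => p _.
  rewrite Phi_tens coef0 ?coef0 // => q; exact: eq_sym.
by rewrite Phi_choi h0 rmorph1 mulr1.
Qed.
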